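(* Let $\mathcal{M}\subseteq\mathbb{S}^n$ be compact. Then $\mathcal{S}(\mathcal{M})$ is rank-one generated if and only if $\mathcal{S}(\mathcal{M})\cap\mathcal{T}(\mathcal{M}')$ is rank-one generated for every nonempty $\mathcal{M}'\subseteq\mathcal{M}$.
   Context: $\mathbb{S}^n$ denotes real symmetric $n\times n$ matrices with $\langle A,B\rangle=\mathrm{tr}(AB)$, $\mathbb{S}^n_+$ the PSD cone. For $\mathcal{M}\subseteq\mathbb{S}^n$, $\mathcal{S}(\mathcal{M})=\{X\in\mathbb{S}^n_+:\langle M,X\rangle\ge0\ \forall M\in\mathcal{M}\}$ and $\mathcal{T}(\mathcal{M})=\{X\in\mathbb{S}^n_+:\langle M,X\rangle=0\ \forall M\in\mathcal{M}\}$. A closed convex cone $\mathcal{S}\subseteq\mathbb{S}^n_+$ is rank-one generated (ROG) if $\mathcal{S}=\mathrm{conv}(\mathcal{S}\cap\{xx^\top:x\in\mathbb{R}^n\})$. *)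

(* Defs.v *)
From HB Require Import structures.
From mathcomp Require Import all_boot all_order all_algebra.
From mathcomp Require Import all_classical all_reals all_analysis.
Set Implicit Arguments. Unset Strict Implicit. Unset Printing Implicit Defensive.
Import Order.TTheory GRing.Theory Num.Theory.
Import numFieldNormedType.Exports.
Local Open Scope classical_set_scope.
Local Open Scope ring_scope.

Section Defs.
Variables (R : realType) (n : nat).

Definition sym_mx (A : 'M[R]_n) : Prop := A^T = A.

Definition mxdot (A B : 'M[R]_n) : R := \tr (A *m B).

Definition psd (X : 'M[R]_n) : Prop :=
  sym_mx X /\ forall x : 'cV[R]_n, 0 <= (x^T *m X *m x) 0 0.

Definition Sset (M : set 'M[R]_n) : set 'M[R]_n :=
  [set X | psd X /\ forall A, M A -> 0 <= mxdot A X].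

Definition Tset (M : set 'M[R]_n) : set 'M[R]_n :=
  [set X | psd X /\ forall A, M A -> mxdot A X = 0].

Definition rank_one_set : set 'M[R]_n := [set X | exists x : 'cV[R]_n, X = x *m x^T].

Definition conv_hull (A : set 'M[R]_n) : set 'M[R]_n :=
  [set X | exists (k : nat) (lam : 'I_k -> R) (Y : 'I_k -> 'M[R]_n),
     (forall i, 0 <= lam i) /\ \sum_(i < k) lam i = 1 /\
     (forall i, A (Y i)) /\ X = \sum_(i < k) lam i *: Y i].

Definition ROG (S : set 'M[R]_n) : Prop := S = conv_hull (S `&` rank_one_set).

End Defs.

(* Main.v *)
Require Import Defs.
From HB Require Import structures.
From mathcomp Require Import all_boot all_order all_algebra.
From mathcomp Require Import all_classical all_reals all_analysis.
From mathcomp Require Import ring lra.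
Import Order.TTheory GRing.Theory Num.Theory.
Import numFieldNormedType.Exports.
Local Open Scope classical_set_scope.
Local Open Scope ring_scope.

Section Alg.
Variables (R : realType) (n : nat).
Local Notation r1 := (@rank_one_set R n).
Local Notation ev i := (@delta_mx R n 1 i 0).
Implicit Types (A B X Y Z : 'M[R]_n) (x y : 'cV[R]_n).

Lemma mxdotD A X Y : mxdot A (X + Y) = mxdot A X + mxdot A Y.
Proof. by rewrite /mxdot mulmxDr mxtraceD. Qed.
Lemma mxdotZ A c X : mxdot A (c *: X) = c * mxdot A X.
Proof. by rewrite /mxdot -scalemxAr mxtraceZ. Qed.
Lemma mxdot0 A : mxdot A 0 = 0.
Proof. by rewrite /mxdot mulmx0 /mxtrace big1 // => i _; rewrite mxE. Qed.
Lemma mxdotBl A B Y : mxdot (A - B) Y = mxdot A Y - mxdot B Y.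
Proof. by rewrite /mxdot mulmxBl linearB. Qed.
Lemma mxdot_sum A (s : seq 'M[R]_n) (F : 'M[R]_n -> 'M[R]_n) :
  mxdot A (\sum_(v <- s) F v) = \sum_(v <- s) mxdot A (F v).
Proof.
elim: s => [|a s IH]; first by rewrite !big_nil mxdot0.
by rewrite !big_cons mxdotD IH.
Qed.

Definition qf X x := (x^T *m X *m x) 0 0.

Lemma qfD X Y x : qf (X + Y) x = qf X x + qf Y x.
Proof. by rewrite /qf mulmxDr mulmxDl mxE. Qed.
Lemma qfZ c X x : qf (c *: X) x = c * qf X x.
Proof. by rewrite /qf -scalemxAr -scalemxAl mxE. Qed.

Lemma psd0 : psd (0 : 'M[R]_n).
Proof. split; first by rewrite /sym_mx trmx0. by move=> x; rewrite mulmx0 mul0mx mxE. Qed.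

Lemma psdD X Y : psd X -> psd Y -> psd (X + Y).
Proof.
move=> [sX qX] [sY qY]; split; first by rewrite /sym_mx linearD /= sX sY.
by move=> x; have := qfD X Y x; rewrite /qf => ->; apply: addr_ge0.
Qed.

Lemma psdZ c X : 0 <= c -> psd X -> psd (c *: X).
Proof.
move=> c0 [sX qX]; split; first by rewrite /sym_mx linearZ /= sX.
by move=> x; have := qfZ c X x; rewrite /qf => ->; apply: mulr_ge0.
Qed.

Lemma mx11_mul (P Q : 'M[R]_1) : (P *m Q) 0 0 = P 0 0 * Q 0 0.
Proof. by rewrite mxE big_ord1. Qed.

Lemma tr11 (P : 'M[R]_1) : P^T 0 0 = P 0 0.
Proof. by rewrite mxE. Qed.

Lemma psd_r1 x : psd (x *m x^T).
Proof.
split; first by rewrite /sym_mx trmx_mul trmxK.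
move=> y; rewrite mulmxA -mulmxA mx11_mul.
have -> : (x^T *m y) = (y^T *m x)^T by rewrite trmx_mul trmxK.
by rewrite tr11 -expr2 sqr_ge0.
Qed.

Lemma psd_sum (s : seq 'cV[R]_n) : psd (\sum_(v <- s) v *m v^T).
Proof.
elim: s => [|a s IH]; first by rewrite big_nil; apply: psd0.
by rewrite big_cons; apply: psdD => //; apply: psd_r1.
Qed.

Lemma bil_sym X x y : X^T = X -> (x^T *m X *m y) 0 0 = (y^T *m X *m x) 0 0.
Proof.
move=> sX; rewrite -tr11 !trmx_mul trmxK sX mulmxA //.
Qed.

Lemma qf_expand X x y t : X^T = X ->
  qf X (x + t *: y) = qf X x + 2 * t * (x^T *m X *m y) 0 0 + t ^+ 2 * qf X y.
Proof.
move=> sX; rewrite /qf; have -> : (x + t *: y)^T = x^T + t *: y^T by rewrite linearD linearZ.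
rewrite !mulmxDl !mulmxDr.
have h : y^T *m X *m x = (x^T *m X *m y)^T by rewrite !trmx_mul trmxK sX mulmxA.
rewrite -!scalemxAl -!scalemxAr h; set P := x^T *m X *m y; set Q := x^T *m X *m x; set U := y^T *m X *m y.
rewrite !mxE.
ring.
Qed.

Lemma qf_delta X i : qf X (ev i) = X i i.
Proof.
by rewrite /qf trmx_delta -rowE -colE !mxE.
Qed.


Definition cone (S : set 'M[R]_n) := S 0 /\ (forall X Y, S X -> S Y -> S (X + Y)) /\
  (forall c X, 0 <= c -> S X -> S (c *: X)).

Definition Gc (S : set 'M[R]_n) := [set X | exists s : seq 'M[R]_n,
  (forall Y, Y \in s -> S Y /\ r1 Y) /\ X = \sum_(Y <- s) Y].

Lemma r1_0 : r1 (0 : 'M[R]_n).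
Proof. by exists 0; rewrite mul0mx. Qed.

Lemma r1_scale c Y : 0 <= c -> r1 Y -> r1 (c *: Y).
Proof.
move=> c0 [x ->]; exists (Num.sqrt c *: x).
by rewrite linearZ /= -scalemxAl -scalemxAr scalerA -expr2 sqr_sqrtr.
Qed.

Lemma cone_sum (S : set 'M[R]_n) (I : eqType) (r : seq I) (F : I -> 'M[R]_n) : cone S ->
  (forall i, i \in r -> S (F i)) -> S (\sum_(i <- r) F i).
Proof.
move=> [S0 [SD _]]; elim: r => [|a r IH] h; first by rewrite big_nil.
rewrite big_cons; apply: SD; first by apply: h; rewrite inE eqxx.
by apply: IH => i ir; apply: h; rewrite inE ir orbT.
Qed.

Lemma conv_sub S P : cone S -> conv_hull (S `&` P) `<=` S.
Proof.
move=> cS X [k [lam [Y [l0 [_ [hY ->]]]]]].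
apply: cone_sum => // i _; apply: cS.2.2 => //; exact: (hY i).1.
Qed.

Lemma Gc_conv S : cone S -> Gc S `<=` conv_hull (S `&` r1).
Proof.
move=> cS X [s [hs ->]].
case: s hs => [|a s'] hs.
  exists 1%N, (fun _ => 1), (fun _ => 0); split => //; split; first by rewrite big_ord1.
  split; first by move=> i; split; [exact: cS.1 | exact: r1_0].
  by rewrite big_nil big_ord1 scaler0.
set s := a :: s'.
have k0 : (size s)%:R != 0 :> R by rewrite pnatr_eq0.
exists (size s), (fun _ => (size s)%:R^-1), (fun i => (size s)%:R *: nth 0 s i).
split; first by move=> i; rewrite invr_ge0 ler0n.
split; first by rewrite sumr_const card_ord -[_ *+ _]mulr_natr mulVf.
split.
  move=> i; have hi : nth 0 s i \in s by rewrite mem_nth.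
  have [h1 h2] := hs _ hi; split; first by apply: cS.2.2 => //; rewrite ler0n.
  by apply: r1_scale => //; rewrite ler0n.
rewrite (big_nth 0) big_mkord; apply: eq_bigr => i _.
by rewrite scalerA mulVf // scale1r.
Qed.

Lemma conv_Gc S P : cone S -> conv_hull (S `&` P) `<=` Gc (S `&` P).
Abort.

Lemma conv_Gc S : cone S -> conv_hull (S `&` r1) `<=` Gc S.
Proof.
move=> cS X [k [lam [Y [l0 [_ [hY ->]]]]]].
exists [seq lam i *: Y i | i <- index_enum 'I_k]; split; last by rewrite big_map.
move=> Z /mapP [i _ ->]; have [h1 h2] := hY i; split; first by apply: cS.2.2.
exact: r1_scale.
Qed.

Lemma Gc_add S X Y : Gc S X -> Gc S Y -> Gc S (X + Y).
Proof.
move=> [s1 [h1 ->]] [s2 [h2 ->]]; exists (s1 ++ s2); split; last by rewrite big_cat.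
by move=> Z; rewrite mem_cat => /orP [] ?; [apply: h1 | apply: h2].
Qed.

Lemma Gc_scale S c X : cone S -> 0 <= c -> Gc S X -> Gc S (c *: X).
Proof.
move=> cS c0 [s [hs ->]]; exists [seq c *: Y | Y <- s]; split; last first.
  by rewrite big_map scaler_sumr.
move=> Z /mapP [Y Ys ->]; have [h1 h2] := hs Y Ys; split; first by apply: cS.2.2.
exact: r1_scale.
Qed.

Lemma Gc_r1 S X : S X -> r1 X -> Gc S X.
Proof.
move=> h1 h2; exists [:: X]; split; last by rewrite big_seq1.
by move=> Z; rewrite inE => /eqP ->.
Qed.

Lemma Gc_mono (S1 S2 : set 'M[R]_n) : S1 `<=` S2 -> Gc S1 `<=` Gc S2.
Proof.
move=> sub X [s [hs ->]]; exists s; split => // Y Ys; have [h1 h2] := hs Y Ys.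
by split => //; apply: sub.
Qed.

Lemma cone_Sset (M : set 'M[R]_n) : cone (Sset M).
Proof.
split; first by split; [exact: psd0 | move=> A _; rewrite mxdot0].
split.
  move=> X Y [pX hX] [pY hY]; split; first exact: psdD.
  by move=> A MA; rewrite mxdotD addr_ge0 //; [apply: hX | apply: hY].
move=> c X c0 [pX hX]; split; first exact: psdZ.
by move=> A MA; rewrite mxdotZ mulr_ge0 //; apply: hX.
Qed.

Lemma cone_ST (M M' : set 'M[R]_n) : cone (Sset M `&` Tset M').
Proof.
have [c0 [cD cZ]] := cone_Sset M.
split; first by split => //; split; [exact: psd0 | move=> A _; rewrite mxdot0].
split.
  move=> X Y [sX [pX hX]] [sY [pY hY]]; split; first exact: cD.
  split; first exact: psdD.
  by move=> A MA; rewrite mxdotD hX // hY // addr0.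
move=> c X c0' [sX [pX hX]]; split; first exact: cZ.
split; first exact: psdZ.
by move=> A MA; rewrite mxdotZ hX // mulr0.
Qed.

Lemma psum_eq0 (s : seq 'M[R]_n) (f : 'M[R]_n -> R) :
  (forall Y, Y \in s -> 0 <= f Y) -> \sum_(Y <- s) f Y = 0 ->
  forall Y, Y \in s -> f Y = 0.
Proof.
elim: s => [|a s IH] h; first by [].
have ha : 0 <= f a by apply: h; rewrite inE eqxx.
have hs : 0 <= \sum_(Y <- s) f Y.
  by rewrite big_seq; apply: sumr_ge0 => i iin; apply: h; rewrite inE iin orbT.
rewrite big_cons => /eqP; rewrite paddr_eq0 // => /andP [/eqP fa /eqP fs] Y.
rewrite inE => /orP [/eqP -> //|Ys]; apply: IH => // Z Zs; apply: h.
by rewrite inE Zs orbT.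
Qed.

Lemma ROG_fwd (M M' : set 'M[R]_n) : ROG (Sset M) -> M' `<=` M -> ROG (Sset M `&` Tset M').
Proof.
move=> E sub; apply/seteqP; split; last exact: (@conv_sub _ _ (cone_ST M M')).
move=> X [SX TX].
have : conv_hull (Sset M `&` r1) X by rewrite -E.
move/(@conv_Gc (Sset M) (cone_Sset M)) => [s [hs eX]].
apply: (@Gc_conv _ (cone_ST M M')); exists s; split => // Y Ys.
have [SY r1Y] := hs Y Ys; split => //; split => //; split; first exact: SY.1.
move=> A M'A.
have h0 : \sum_(Z <- s) mxdot A Z = 0.
  by rewrite -(mxdot_sum A s id) -eX; apply: TX.2.
apply: (@psum_eq0 s (mxdot A) _ h0 _ Ys).
by move=> Z Zs; apply: (hs Z Zs).1.2; apply: sub.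
Qed.


Lemma ent_delta X (i j : 'I_n) : ((ev j)^T *m X *m ev i) 0 0 = X j i.
Proof. by rewrite trmx_delta -rowE -colE !mxE. Qed.

Lemma qfB X Y x : qf (X - Y) x = qf X x - qf Y x.
Proof. by rewrite /qf mulmxBr mulmxBl !mxE. Qed.

Lemma CS_pos X x i : psd X -> 0 < X i i ->
  ((x^T *m X *m ev i) 0 0) ^+ 2 <= qf X x * X i i.
Proof.
move=> [sX qX] c0; set b := (x^T *m X *m ev i) 0 0; set c := X i i.
have h := qX (x + (- b / c) *: ev i).
rewrite -/(qf X _) qf_expand // -/b qf_delta -/c in h.
have e : qf X x * c - b ^+ 2 = c * (qf X x + 2 * (- b / c) * b + (- b / c) ^+ 2 * c).
  by field; rewrite gt_eqF.
rewrite -subr_ge0 e; apply: mulr_ge0 => //; exact: ltW.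
Qed.

Lemma CS_zero X x i : psd X -> X i i = 0 -> (x^T *m X *m ev i) 0 0 = 0.
Proof.
move=> [sX qX] c0; set b := (x^T *m X *m ev i) 0 0.
have [//|bn0] := eqVneq b 0.
have h := qX (x + (- (qf X x + 1) / (2 * b)) *: ev i).
rewrite -/(qf X _) qf_expand // -/b qf_delta c0 in h.
have e : qf X x + 2 * (- (qf X x + 1) / (2 * b)) * b + (- (qf X x + 1) / (2 * b)) ^+ 2 * 0 = -1.
  by field.
by move: h; rewrite e ler0N1.
Qed.

Lemma psd_diag X i : psd X -> 0 <= X i i.
Proof. by move=> [_ qX]; rewrite -qf_delta; apply: qX. Qed.

Definition dg (X : 'M[R]_n) : {set 'I_n} := [set j | X j j != 0]%SET.

Lemma psd_decomp X : psd X -> exists s : seq 'cV[R]_n, X = \sum_(v <- s) v *m v^T.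
Proof.
move=> pX; move: (leqnn #|dg X|).
move: {2}#|dg X| => k; elim: k X pX => [|k IH] X pX hk.
all: case: (pickP (fun j => X j j != 0)) => [i Xi|none].
- have : (0 < #|dg X|)%N by apply/card_gt0P; exists i; rewrite inE.
  by move=> h; move: (leq_trans h hk).
- exists [::]; rewrite big_nil; apply/matrixP => a b; rewrite mxE.
  have := none b => /negbFE/eqP hb.
  by have := CS_zero X (ev a) b pX hb; rewrite ent_delta.
- have [sX qX] := pX.
  set c := X i i.
  have c0 : 0 < c by rewrite lt_def Xi (psd_diag X i pX).
  set col := X *m ev i.
  set v := (Num.sqrt c)^-1 *: col.
  have vvE : v *m v^T = c^-1 *: (col *m col^T).
    by rewrite /v linearZ /= -scalemxAl -scalemxAr scalerA -expr2 exprVn sqr_sqrtr // ltW.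
  set X1 := X - v *m v^T.
  have qX1 : forall x, qf X1 x = qf X x - c^-1 * ((x^T *m X *m ev i) 0 0) ^+ 2.
    move=> x; rewrite /X1 qfB vvE qfZ; congr (_ - _ * _).
    rewrite /qf mulmxA -mulmxA mx11_mul /col mulmxA expr2; congr (_ * _).
    by rewrite -tr11 trmx_mul trmxK mulmxA.
  have pX1 : psd X1.
    split.
      by rewrite /sym_mx /X1 linearB /= trmx_mul trmxK sX.
    move=> x; rewrite -/(qf X1 x) qX1.
    have h := CS_pos X x i pX c0.
    rewrite -/c in h.
    have -> : qf X x - c^-1 * ((x^T *m X *m ev i) 0 0) ^+ 2 =
      (qf X x * c - ((x^T *m X *m ev i) 0 0) ^+ 2) / c.
      by field; rewrite gt_eqF.
    by apply: divr_ge0; [rewrite subr_ge0 | exact: ltW].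
  have d1 : forall j, X1 j j = X j j - c^-1 * X j i ^+ 2.
    by move=> j; rewrite -(qf_delta X1 j) qX1 qf_delta ent_delta.
  have prop : dg X1 \proper dg X.
    apply/properP; split.
      apply/fintype.subsetP => j; rewrite !inE; apply: contra => /eqP Xj.
      have := psd_diag X1 j pX1; rewrite d1 Xj sub0r oppr_ge0 => h1.
      rewrite oppr_eq0; apply/eqP/le_anti; rewrite h1 /=.
      by apply: mulr_ge0; [rewrite invr_ge0 ltW | exact: sqr_ge0].
    exists i; rewrite !inE // d1 -/c negbK.
    by rewrite expr2 mulrA mulVf ?mul1r ?subrr // gt_eqF.
  have hk1 : (#|dg X1| <= k)%N.
    by rewrite -ltnS; apply: leq_trans hk; apply: proper_card.
  have [s es] := IH X1 pX1 hk1.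
  exists (v :: s); rewrite big_cons -es /X1 addrC subrK //.
- exists [::]; rewrite big_nil; apply/matrixP => a b; rewrite mxE.
  have := none b => /negbFE/eqP hb.
  by have := CS_zero X (ev a) b pX hb; rewrite ent_delta.
Qed.


Lemma entry_le (D : 'M[R]_n) i j : `|D i j| <= `|D|.
Proof.
rewrite [leRHS]/Num.Def.normr /= mx_normrE; apply/bigmax_geP; right => /=.
by exists (i, j).
Qed.

Lemma mxdot_bound D Y : `|mxdot D Y| <= `|D| * \sum_i \sum_j `|Y j i|.
Proof.
rewrite /mxdot /mxtrace mulr_sumr; apply: le_trans (ler_norm_sum _ _ _) _.
apply: ler_sum => i _; rewrite mxE mulr_sumr; apply: le_trans (ler_norm_sum _ _ _) _.
apply: ler_sum => j _; rewrite normrM; apply: ler_wpM2r => //; exact: entry_le.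
Qed.

Lemma mxdot_cont Y : continuous (fun A : 'M[R]_n => mxdot A Y).
Proof.
move=> A; have FA : Filter (nbhs A) by apply: nbhs_filter.
apply/(@cvgrPdist_le _ _ _ (nbhs A) FA) => /= e e0.
set C := \sum_i \sum_j `|Y j i| + 1.
have C0 : 0 < C by rewrite ltr_pwDr // sumr_ge0 // => i _; rewrite sumr_ge0.
apply/nbhs_ballP; exists (e / C) => /=; first by rewrite divr_gt0.
move=> B; rewrite -ball_normE /ball_ /= => hB.
rewrite -mxdotBl; apply: le_trans (mxdot_bound _ _) _.
apply: le_trans (_ : `|A - B| * C <= e).
  by apply: ler_wpM2l => //; rewrite lerDl.
by rewrite -ler_pdivlMr // ltW.
Qed.

Lemma slack (M : set 'M[R]_n) Z Y : compact M -> (forall A, M A -> 0 < mxdot A Z) ->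
  exists d, 0 < d /\ forall A s, M A -> `|s| <= d -> 0 <= mxdot A (Z + s *: Y).
Proof.
move=> cM hZ.
pose h := fun A : 'M[R]_n => mxdot A Y * (mxdot A Z)^-1.
have ch : {within M, continuous h}.
  apply: continuous_in_subspaceT => A; rewrite inE => MA.
  have FA : Filter (nbhs A) by apply: nbhs_filter.
  apply: (@cvgM _ _ _ FA); first exact: (mxdot_cont Y A).
  apply: (@cvgV _ _ _ FA); first by rewrite gt_eqF // hZ.
  exact: (mxdot_cont Z A).
have := compact_bounded (continuous_compact ch cM).
move=> [K [Kreal hK]].
have := hK (`|K| + 1); rewrite ltr_pwDr // ?real_ler_norm // => /(_ isT) hb.
exists (`|K| + 1)^-1; split; first by rewrite invr_gt0 ltr_pwDr.
move=> A s MA hs.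
have zA := hZ A MA.
have hA : `|h A| <= `|K| + 1 by apply: hb; exists A.
rewrite mxdotD mxdotZ.
have -> : mxdot A Z + s * mxdot A Y = mxdot A Z * (1 + s * h A).
  by rewrite /h; field; rewrite gt_eqF.
apply: mulr_ge0; first exact: ltW.
have K1 : 0 < `|K| + 1 by rewrite ltr_pwDr.
have : `|s * h A| <= 1.
  rewrite normrM; apply: le_trans (_ : (`|K| + 1)^-1 * (`|K| + 1) <= 1).
    by apply: ler_pM.
  by rewrite mulVf // gt_eqF.
rewrite ler_norml => /andP [h1 _]; lra.
Qed.


Lemma sup_tight (M : set 'M[R]_n) (W D : 'M[R]_n) (B : R) : compact M -> 0 <= B -> Sset M W ->
  (forall s, 0 <= s <= B -> psd (W + s *: D)) ->
  exists s, [/\ 0 <= s <= B, Sset M (W + s *: D) &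
    (s = B \/ exists A, M A /\ mxdot A (W + s *: D) = 0)].
Proof.
move=> cM B0 [pW hW] hpsd.
pose E := [set s : R | 0 <= s <= B /\ forall A, M A -> 0 <= mxdot A (W + s *: D)].
have E0 : E 0.
  split; first by rewrite lexx B0.
  by move=> A MA; rewrite scale0r addr0; apply: hW.
have hs : has_sup E.
  split; first by exists 0.
  by exists B => s [/andP [_ ->]].
set s0 := sup E.
have s0ge : 0 <= s0 by apply: sup_upper_bound.
have s0le : s0 <= B by apply: ge_sup; [exists 0 | move=> s [/andP [_ ->]]].
have cons : forall A, M A -> 0 <= mxdot A (W + s0 *: D).
  move=> A MA; rewrite mxdotD mxdotZ.
  have a0 := hW A MA.
  set a := mxdot A W in a0 *; set b := mxdot A D.
  have [b0|b0] := leP 0 b; first by apply: addr_ge0 => //; apply: mulr_ge0.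
  set u := - a / b.
  have ub : u * b = - a by rewrite /u; field; rewrite lt_eqF.
  have : s0 <= u.
    apply: ge_sup; first by exists 0.
    move=> s [_ /(_ A MA)]; rewrite mxdotD mxdotZ -/a -/b => h; nra.
  move=> h; nra.
exists s0; split; [by rewrite s0ge s0le | split; [apply: hpsd; by rewrite s0ge s0le | exact: cons] | ].
have [->|sB] := eqVneq s0 B; first by left.
have sB' : s0 < B by rewrite lt_neqAle sB s0le.
right; apply: contrapT => nt.
have pos : forall A, M A -> 0 < mxdot A (W + s0 *: D).
  move=> A MA; rewrite lt_def cons // andbT; apply/eqP => e.
  by apply: nt; exists A; split => //; rewrite e.
have [d [d0 hd]] := slack M _ D cM pos.
set t := if d <= B - s0 then d else B - s0.
have t0 : 0 < t by rewrite /t; case: ifP => _; lra.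
have tB : t <= B - s0 by rewrite /t; case: ifP => h; lra.
have td : t <= d by rewrite /t; case: ifP => h; lra.
have Et : E (s0 + t).
  split.
    apply/andP; split; first by rewrite addr_ge0 // ltW.
    by rewrite -lerBrDl.
  move=> A MA; rewrite scalerDl addrA; apply: hd => //.
  by rewrite ger0_norm; [exact: td | exact: ltW].
have := sup_upper_bound hs Et; rewrite -/s0 => h; lra.
Qed.


Lemma comb X Y a b c d :
  a *: (X + b *: Y) + c *: (X + d *: Y) = (a + c) *: X + (a * b + c * d) *: Y.
Proof. by rewrite !scalerDr !scalerA !scalerDl addrACA. Qed.

Lemma main_ind (M : set 'M[R]_n) : compact M ->
  (forall Z, Sset M Z -> (exists A, M A /\ mxdot A Z = 0) -> Gc (Sset M) Z) ->
  forall s : seq 'cV[R]_n, Sset M (\sum_(v <- s) v *m v^T) ->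
    Gc (Sset M) (\sum_(v <- s) v *m v^T).
Proof.
move=> cM H; elim=> [|y s IH].
  by rewrite big_nil => _; exists [::]; split => //; rewrite big_nil.
rewrite big_cons; set Y := y *m y^T; set X' := \sum_(v <- s) v *m v^T => SX.
have pX' : psd X' := psd_sum s.
have pY : psd Y := psd_r1 y.
have cS := cone_Sset M.
have eXs : forall t, Y + X' + t *: Y = X' + (1 + t) *: Y.
  by move=> t; rewrite scalerDl scale1r addrAC addrC addrA.
have [s1 [/andP [s10 s11] Sa ta]] : exists s, [/\ 0 <= s <= 1, Sset M (Y + X' + s *: - Y) &
    (s = 1 \/ exists A, M A /\ mxdot A (Y + X' + s *: - Y) = 0)].
  apply: sup_tight => //.
  move=> t /andP [t0 t1]; rewrite scalerN -scaleNr eXs; apply: psdD => //.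
  apply: psdZ => //; lra.
have Ga : Gc (Sset M) (Y + X' + s1 *: - Y).
  case: ta => [e1|tight]; last exact: H.
  move: Sa; rewrite e1 scalerN scale1r addrAC subrr add0r => Sa.
  exact: IH.
have [Ypos|Yneg] := pselect (forall A, M A -> 0 <= mxdot A Y).
  have -> : Y + X' = Y + X' + s1 *: - Y + s1 *: Y by rewrite scalerN subrK.
  apply: Gc_add => //; apply: Gc_r1.
    by apply: cS.2.2 => //; split.
  by apply: r1_scale => //; exists y.
have [A0 [MA0 neg]] : exists A0, M A0 /\ mxdot A0 Y < 0.
  apply: contrapT => h; apply: Yneg => A MA; rewrite leNgt; apply/negP => lt.
  by apply: h; exists A.
have a0 := SX.2 A0 MA0.
set a := mxdot A0 (Y + X') in a0; set b := mxdot A0 Y in neg.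
set Bb := - a / b + 1.
have Bb0 : 0 <= Bb.
  rewrite /Bb; apply: addr_ge0 => //; rewrite mulNr -mulrN -invrN.
  by apply: divr_ge0 => //; rewrite oppr_ge0 ltW.
have [s2 [/andP [s20 s2B] Sb tb]] := sup_tight M (Y + X') Y Bb cM Bb0 SX
  (fun t ht => ltac:(rewrite eXs; apply: psdD => //; apply: psdZ => //;
                     move: ht => /andP [ht _]; lra)).
have Gb : Gc (Sset M) (Y + X' + s2 *: Y).
  case: tb => [e2|tight]; last exact: H.
  exfalso; have := Sb.2 A0 MA0; rewrite e2 mxdotD mxdotZ -/a -/b /Bb.
  have -> : a + (- a / b + 1) * b = b by field; rewrite lt_eqF.
  by rewrite leNgt neg.
have [e0|ne0] := eqVneq (s1 + s2) 0.
  have s0 : s1 = 0 by lra.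
  by move: Ga; rewrite s0 scale0r addr0.
have sp : 0 < s1 + s2 by rewrite lt_def ne0 addr_ge0.
set th := s2 / (s1 + s2).
have -> : Y + X' = th *: (Y + X' + (- s1) *: Y) + (1 - th) *: (Y + X' + s2 *: Y).
  rewrite comb.
  have -> : th + (1 - th) = 1 by ring.
  have -> : th * - s1 + (1 - th) * s2 = 0 by rewrite /th; field; rewrite gt_eqF.
  by rewrite scale1r scale0r addr0.
apply: Gc_add; apply: Gc_scale => //.
- by rewrite /th divr_ge0 // ltW.
- by rewrite scaleNr -scalerN.
- by rewrite subr_ge0 /th ler_pdivrMr // mul1r lerDr.
Qed.

End Alg.

Theorem lemma2p13 (R : realType) (n : nat) (M : set 'M[R]_n) :
  (forall A, M A -> sym_mx A) -> compact M ->
  ROG (Sset M) <->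
  (forall M' : set 'M[R]_n, M' `<=` M -> M' !=set0 -> ROG (Sset M `&` Tset M')).
Proof.
move=> _ cM; split.
  by move=> E M' sub _; exact: (@ROG_fwd R n M M' E sub).
move=> H; apply/seteqP; split; last exact: (@conv_sub R n _ _ (@cone_Sset R n M)).
move=> X SX; apply: (@Gc_conv R n _ (@cone_Sset R n M)).
have [s es] := psd_decomp R n X SX.1.
rewrite es in SX *; apply: (@main_ind R n M cM) => // Z SZ [A0 [MA0 z0]].
pose M' := [set A | M A /\ mxdot A Z = 0].
have E := H M' (fun A h => h.1) (ex_intro _ A0 (conj MA0 z0)).
have : (Sset M `&` Tset M') Z.
  split => //; split; first exact: SZ.1.
  by move=> A [_ ->].
rewrite E => /(@conv_Gc R n _ (@cone_ST R n M M')).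
by apply: (@Gc_mono R n) => A [].
Qed.
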